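(* Let $G$ be a $4$-regular graph on $n\ge 7$ vertices and let $G'$ be the labeled complete graph on $V(G)$ whose $+$ edges are exactly the edges of $G$ (all other pairs labeled $-$). Let $H$ be the labeled complete graph obtained from $G'$ by adding, for every $3$-set $\{u,v,w\}\subseteq V(G')$, a new set $C_{uvw}$ of $7$ vertices, where all edges within $C_{uvw}$ are $+$, all edges from $C_{uvw}$ to $u,v,w$ are $+$, and all other edges incident to $C_{uvw}$ are $-$ (edges among vertices of $G'$ keep their labels from $G'$). Assign tolerance $t_u=7\left(\binom{n-1}{2}-1\right)+2$ to each $u\in V(G')$ and $t_v=3$ to each $v\in V(H)\setminus V(G')$. If $H$ has a clustering in which every vertex $v$ has at most $t_v$ incident errors, then every cluster of that clustering contains at most three vertices of $G'$, and every cluster contains vertices from exactly one of the sets $C_{uvw}$.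
   Context: A clustering is a partition of the vertex set. An error at a vertex $v$ is an incident edge that is a $+$ edge between different clusters or a $-$ edge within a cluster. *)

(* Defs.v *)
From mathcomp Require Import all_boot.
Set Implicit Arguments. Unset Strict Implicit. Unset Printing Implicit Defensive.

Section Construction.
Variable V : finType.

Definition triple := {S : {set V} | #|S| == 3}.

(* vertex set of H: V(G') plus, for each 3-set S, the 7 vertices of C_S *)
Definition Hvert := (V + (triple * 'I_7))%type.

Definition Hplus (e : rel V) (x y : Hvert) : bool :=
  match x, y with
  | inl a, inl b => (a != b) && e a b
  | inl a, inr (s, _) => a \in val s
  | inr (s, _), inl a => a \in val s
  | inr (s, i), inr (t, j) => (s == t) && (i != j)
  end.

Definition Hminus (e : rel V) (x y : Hvert) : bool :=
  (x != y) && ~~ Hplus e x y.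

Definition errors (e : rel V) (P : {set {set Hvert}}) (x : Hvert) : nat :=
  #|[set y | (Hplus e x y && (y \notin pblock P x))
           || (Hminus e x y && (y \in pblock P x))]|.

Definition tol (x : Hvert) : nat :=
  match x with
  | inl _ => 7 * ('C(#|V|.-1, 2) - 1) + 2
  | inr _ => 3
  end.

End Construction.

Definition simple_graph (V : finType) (e : rel V) :=
  irreflexive e /\ symmetric e.
Definition regular (V : finType) (e : rel V) (k : nat) :=
  forall v, #|[set w | e v w]| = k.

(* Main.v *)
Require Import Defs.
From mathcomp Require Import all_boot.
From mathcomp Require Import zify.

Section Proof.
Variables (V : finType) (e : rel V) (P : {set {set Hvert V}}).
Hypothesis tI : trivIset P.
Hypothesis cov : forall x, x \in cover P.
Hypothesis herr : forall x : Hvert V, errors e P x <= tol x.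

Local Notation pb := (pblock P).

Lemma err_ge x (Y : {set Hvert V}) :
  (forall y, y \in Y -> (Hplus e x y && (y \notin pb x)) || (Hminus e x y && (y \in pb x))) ->
  #|Y| <= errors e P x.
Proof.
move=> HY; apply: subset_leq_card; apply/subsetP => y Hy; rewrite inE; exact: HY.
Qed.

Definition cv (S : triple V) (k : 'I_7) : Hvert V := inr (S, k).

Lemma cv_inj S : injective (cv S).
Proof. by move=> a b [->]. Qed.

Lemma claim1 S i j : pb (inr (S, i)) = pb (inr (S, j)).
Proof.
pose A i := [set k : 'I_7 | inr (S, k) \in pb (inr (S, i))].
have HA : forall i, 4 <= #|A i|.
  move=> i0.
  have H1 : #|~: A i0| <= 3.
    have := herr (inr (S, i0)); apply: leq_trans.
    rewrite -(card_imset _ (@cv_inj S)); apply: err_ge => y /imsetP [k Hk ->].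
    move: Hk; rewrite !inE => Hk; rewrite /Hplus /cv eqxx /= ?(negbTE Hk) /= andbT andbF orbF.
    apply/eqP => Eik; move: Hk; rewrite -Eik mem_pblock cov.
    by [].
  have := cardsC (A i0); rewrite card_ord; lia.
apply/eqP; apply: contraT => Hne.
have Hdis : A i :&: A j = set0.
  apply/setP => k; rewrite !inE; apply/negP => /andP [Hi Hj].
  move/eqP: Hne; apply.
  by rewrite -(same_pblock tI Hi) (same_pblock tI Hj).
have := cardsUI (A i) (A j); rewrite Hdis cards0.
have := max_card (A i :|: A j); rewrite card_ord.
have := HA i; have := HA j; lia.
Qed.

Lemma claim2 S T i j : inr (T, j) \in pb (inr (S, i)) -> T = S.
Proof.
move=> Hin; apply/eqP; apply: contraT => Hne.
have Hk : forall k, inr (T, k) \in pb (inr (S, i)).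
  move=> k; rewrite -(same_pblock tI Hin) (claim1 T j k) mem_pblock; exact: cov.
have H7 : 7 <= errors e P (inr (S, i)).
  rewrite -{1}(card_ord 7) -cardsT -(card_imset _ (@cv_inj T)).
  apply: err_ge => y /imsetP [k _ ->].
  rewrite Hk /Hminus /Hplus /cv /=.
  rewrite andbF /= andbT (eq_sym S T) (negbTE Hne) /= andbT.
  apply/eqP => [[E _]]; by move: Hne; rewrite E eqxx.
have := herr (inr (S, i)); rewrite /tol; lia.
Qed.

Lemma claim3 (u : V) : 7 <= #|V| ->
  exists (S : triple V) (i : 'I_7), u \in val S /\ (inr (S, i) : Hvert V) \in pb (inl u).
Proof.
move=> Hn.
case: (boolP [exists p : triple V * 'I_7, (u \in val p.1) && ((inr p : Hvert V) \in pb (inl u))]).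
  by move/existsP => [[S i] /andP [H1 H2]]; exists S, i.
rewrite negb_exists => /forallP Hno.
pose Ts := [set S : triple V | u \in val S].
pose W := [set S : {set V} | (#|S| == 3) && (u \in S)].
pose D := [set A : {set V} | A \subset [set~ u] & #|A| == 2].
have HD : #|D| = 'C(#|V|.-1, 2) by rewrite cards_draws cardsC1.
have HDW : #|D| <= #|W|.
  rewrite -(@card_in_imset _ _ (fun A => u |: A)).
    apply: subset_leq_card; apply/subsetP => S /imsetP [A HA ->].
    move: HA; rewrite !inE => /andP [HA1 /eqP HA2].
    have HuA : u \notin A.
      by apply/negP => HuA; move/subsetP: HA1 => /(_ u HuA); rewrite !inE eqxx.
    by rewrite cardsU1 HuA HA2 eqxx.
  move=> A B; rewrite !inE => /andP [HA _] /andP [HB _] E.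
  have HuA : u \notin A.
    by apply/negP => HuA; move/subsetP: HA => /(_ u HuA); rewrite !inE eqxx.
  have HuB : u \notin B.
    by apply/negP => HuB; move/subsetP: HB => /(_ u HuB); rewrite !inE eqxx.
  by rewrite -(setU1K HuA) E setU1K.
have HWT : #|W| <= #|Ts|.
  rewrite -(card_imset Ts val_inj); apply: subset_leq_card.
  apply/subsetP => S; rewrite inE => /andP [H3 HuS].
  apply/imsetP; exists (Sub S H3 : triple V) => //; by rewrite inE SubK.
have Herr : #|[set (inr p : Hvert V) | p in setX Ts [set: 'I_7]]| <= errors e P (inl u).
  apply: err_ge => y /imsetP [[S k] HS ->].
  move: HS; rewrite !inE /= andbT => HS.
  have := Hno (S, k); rewrite /= HS /= => ->.
  by [].
move: Herr; rewrite card_imset; last by move=> a b [].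
rewrite cardsX cardsT card_ord.
have := herr (inl u); rewrite /tol.
have : 0 < 'C(#|V|.-1, 2) by rewrite bin_gt0; lia.
lia.
Qed.
End Proof.

Theorem lemma2 (V : finType) (e : rel V) :
  simple_graph e -> regular e 4 -> 7 <= #|V| ->
  forall P : {set {set Hvert V}},
    partition P [set: Hvert V] ->
    (forall x : Hvert V, errors e P x <= tol x) ->
    forall B, B \in P ->
      #|[set a : V | inl a \in B]| <= 3 /\
      exists S : triple V,
        (exists i, inr (S, i) \in B) /\
        (forall T : triple V, (exists j, inr (T, j) \in B) -> T = S).
Proof.
move=> _ _ Hn P /and3P [/eqP Hcov tI H0] herr B HB.
have cov : forall x, x \in cover P by move=> x; rewrite Hcov inE.
have HC : exists S i, (inr (S, i) : Hvert V) \in B.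
  have : B != set0 by apply: contraNneq H0 => <-.
  case/set0Pn => [[u|[S i]] Hz]; last by exists S, i.
  have [S [i [_ Hi]]] := @claim3 _ e _ tI herr u Hn.
  by exists S, i; rewrite -(def_pblock tI HB Hz).
have [S0 [i0 H0i]] := HC.
have Huniq : forall T : triple V, (exists j, (inr (T, j) : Hvert V) \in B) -> T = S0.
  move=> T [j Hj]; apply: (@claim2 _ e _ tI cov herr _ _ i0 j).
  by rewrite (def_pblock tI HB H0i).
split; last by exists S0; split; [exists i0 | ].
have : #|val S0| = 3 by apply/eqP; exact: (valP S0).
move=> H3; apply: (leq_trans _ (eq_leq H3)); apply: subset_leq_card; apply/subsetP => a; rewrite inE => Ha.
have [S [i [HaS Hi]]] := @claim3 _ e _ tI herr a Hn.
rewrite (def_pblock tI HB Ha) in Hi.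
by rewrite -(Huniq S (ex_intro _ i Hi)).
Qed.
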